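(* For any $q\ge 1$, the simplicial complex $\mathbb{M}_q^2$ is a simplicial tree.
   Context: $\mathbb{M}_q^2$: vertex set $\{\ell_{i,j}:1\le i\le j\le q\}$, $\mathcal{M}=\{\ell_{i,j}:1\le i<j\le q\}$, $\mathcal{M}_i=\mathcal{M}\cup\{\ell_{i,i}\}$, and $\mathbb{M}_q^2$ is the simplicial complex whose facets are $\mathcal{M}_1,\ldots,\mathcal{M}_q$. A subcollection of a simplicial complex $\Delta$ is a subcomplex whose facets are facets of $\Delta$. $\Delta$ is connected if any two facets $F,G$ are joined by a sequence of facets $F=F_0,\ldots,F_r=G$ with $F_{k-1}\cap F_k\neq\emptyset$. A facet $F$ is a leaf if it is the only facet, or there is a facet $G\neq F$ with $F\cap H\subseteq G$ for all facets $H\neq F$. $\Delta$ is a simplicial forest if every subcollection has a leaf, and a simplicial tree if it is a connected simplicial forest. *)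

(* Defs.v *)
From mathcomp Require Import all_boot.
Set Implicit Arguments. Unset Strict Implicit. Unset Printing Implicit Defensive.

(* A simplicial complex on a finite vertex type V is represented by its
   set of facets D : {set {set V}}. *)
Section SimplicialTrees.
Variable V : finType.

Definition subcollection (D S : {set {set V}}) : bool :=
  (S \subset D) && (S != set0).

Definition facet_adj (D : {set {set V}}) : rel {set V} :=
  fun F G => [&& F \in D, G \in D & F :&: G != set0].

Definition sc_connected (D : {set {set V}}) : Prop :=
  forall F G, F \in D -> G \in D -> connect (facet_adj D) F G.

Definition is_leaf (D : {set {set V}}) (F : {set V}) : Prop :=
  F \in D /\
  (D = [set F] \/
   exists2 G, G \in D & G != F /\ (forall H, H \in D -> H != F -> F :&: H \subset G)).

Definition simplicial_forest (D : {set {set V}}) : Prop :=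
  forall S, subcollection D S -> exists F, is_leaf S F.

Definition simplicial_tree (D : {set {set V}}) : Prop :=
  sc_connected D /\ simplicial_forest D.

End SimplicialTrees.

(* The complex M_q^2.  Vertices l_{i,j} (1 <= i <= j <= q) are encoded
   0-indexed as pairs (i, j) : 'I_q * 'I_q with i <= j. *)
Definition Mset (q : nat) : {set 'I_q * 'I_q} := [set p : 'I_q * 'I_q | (p.1 < p.2)%N].

Definition Mfacet (q : nat) (i : 'I_q) : {set 'I_q * 'I_q} :=
  Mset q :|: [set (i, i)].

Definition M2 (q : nat) : {set {set 'I_q * 'I_q}} :=
  [set Mfacet i | i : 'I_q].

(* Main.v *)
Require Import Defs.
From mathcomp Require Import all_boot.

Lemma Mfacet_inter (q : nat) (i k : 'I_q) x :
  x \in Mfacet i -> x \in Mfacet k -> i != k -> x \in Mset q.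
Proof.
rewrite /Mfacet !in_setU !in_set1.
case/orP=> [//|/eqP->]; case/orP=> [//|/eqP[->]]; by rewrite eqxx.
Qed.

Lemma Mfacet_meet (q : nat) (i j : 'I_q) : Mfacet i :&: Mfacet j != set0.
Proof.
apply/set0Pn.
case: (eqVneq i j) => [->|nij].
  by exists (j, j); rewrite setIid /Mfacet in_setU in_set1 eqxx orbT.
case: (ltngtP i j) => [lt|lt|eq]; last by move/val_inj: eq => e; rewrite e eqxx in nij.
- exists (i, j); rewrite in_setI /Mfacet !in_setU !inE /=.
  by rewrite lt.
- exists (j, i); rewrite in_setI /Mfacet !in_setU !inE /=.
  by rewrite lt.
Qed.

Theorem proposition3p3 (q : nat) : 1 <= q -> simplicial_tree (M2 q).
Proof.
move=> _; split.
  move=> F G /imsetP[i _ ->] /imsetP[j _ ->].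
  apply: connect1; rewrite /facet_adj !imset_f //=.
  exact: Mfacet_meet.
move=> S /andP[sSD /set0Pn[F FS]].
exists F; split => //.
case: (boolP [exists G in S, G != F]) => [/exists_inP[G GS nGF]|none].
  right; exists G => //; split => // H HS nHF.
  apply/subsetP => x; rewrite in_setI => /andP[xF xH].
  move: (subsetP sSD _ FS) (subsetP sSD _ HS) (subsetP sSD _ GS) nHF.
  move=> /imsetP[i _ Fi] /imsetP[k _ Hk] /imsetP[j _ Gj] nHF'.
  subst F H G.
  have nik : i != k by apply: contraNneq nHF' => ->.
  have := Mfacet_inter _ _ _ _ xF xH nik.
  by rewrite /Mfacet in_setU => ->.
left; apply/setP => G; rewrite in_set1.
apply/idP/eqP => [GS|->//].
apply/eqP; apply: contraNT none => nGF.
by apply/exists_inP; exists G.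
Qed.
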